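(* Let $N\ge1$ and for $1\le i\le N$ let $S_i:\mathcal H\to\mathcal H$ be a $\kappa_i$-strict pseudocontraction with $0\le\kappa_i<1$; set $\kappa=\max_i\kappa_i$ and assume $F=\bigcap_{i=1}^N\mathrm{Fix}(S_i)\neq\emptyset$. For each $n$ let $\lambda_{n,1},\dots,\lambda_{n,N}>0$ with $\sum_i\lambda_{n,i}=1$ and $\inf_n\lambda_{n,i}>0$ for each $i$, and set $Q_n=\sum_{i=1}^N\lambda_{n,i}S_i$. Let $\alpha_n\in(\kappa,1)$ and $T_nx=\frac{x+R_nx}{2}+\frac12\big(\frac{\kappa-\alpha_n}{1-\alpha_n}\big)(x-R_nx)$ with $R_nx=\alpha_nx+(1-\alpha_n)Q_nx$. Then $(T_n)_{n\ge0}$ is coherent: for every bounded sequence $(z_n)$ with $\sum_n\|z_{n+1}-z_n\|^2<\infty$ and $\sum_n\|z_n-T_nz_n\|^2<\infty$, every weak cluster point of $(z_n)$ lies in $\bigcap_n\mathrm{Fix}(T_n)=F$.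
   Context: A map $Q:\mathcal H\to\mathcal H$ is a $\kappa$-strict pseudocontraction ($0\le\kappa<1$) if $\|Qx-Qy\|^2\le\|x-y\|^2+\kappa\|(I-Q)x-(I-Q)y\|^2$ for all $x,y$. $\mathrm{Fix}(T)=\{x:Tx=x\}$. $\mathcal H$ is a real Hilbert space. *)

(* Defs.v *)
From Stdlib Require Import Reals Lra Lia List.
Open Scope R_scope.

Record Hilbert := {
  hcar :> Type;
  hzero : hcar;
  hadd : hcar -> hcar -> hcar;
  hopp : hcar -> hcar;
  hscal : R -> hcar -> hcar;
  hinner : hcar -> hcar -> R;
  hadd_assoc : forall x y z, hadd x (hadd y z) = hadd (hadd x y) z;
  hadd_comm : forall x y, hadd x y = hadd y x;
  hadd_0l : forall x, hadd hzero x = x;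
  hadd_oppl : forall x, hadd (hopp x) x = hzero;
  hscal_assoc : forall a b x, hscal a (hscal b x) = hscal (a * b) x;
  hscal_1 : forall x, hscal 1 x = x;
  hscal_addr : forall a x y, hscal a (hadd x y) = hadd (hscal a x) (hscal a y);
  hscal_addl : forall a b x, hscal (a + b) x = hadd (hscal a x) (hscal b x);
  hinner_sym : forall x y, hinner x y = hinner y x;
  hinner_addl : forall x y z, hinner (hadd x y) z = hinner x z + hinner y z;
  hinner_scall : forall a x y, hinner (hscal a x) y = a * hinner x y;
  hinner_pos : forall x, 0 <= hinner x x;
  hinner_def : forall x, hinner x x = 0 -> x = hzero;
  hcomplete : forall u : nat -> hcar,
    (forall eps, eps > 0 -> exists N, forall m n, (m >= N)%nat -> (n >= N)%nat ->
        sqrt (hinner (hadd (u m) (hopp (u n))) (hadd (u m) (hopp (u n)))) < eps) ->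
    exists l, forall eps, eps > 0 -> exists N, forall n, (n >= N)%nat ->
        sqrt (hinner (hadd (u n) (hopp l)) (hadd (u n) (hopp l))) < eps
}.

Arguments hzero {h}.
Arguments hadd {h}.
Arguments hopp {h}.
Arguments hscal {h}.
Arguments hinner {h}.

Section Ops.
Context {H : Hilbert}.
Definition hsub (x y : H) : H := hadd x (hopp y).
Definition hnorm (x : H) : R := sqrt (hinner x x).

Definition strict_pseudo (k : R) (Q : H -> H) : Prop :=
  forall x y : H,
    (hnorm (hsub (Q x) (Q y)))^2 <=
    (hnorm (hsub x y))^2 + k * (hnorm (hsub (hsub x (Q x)) (hsub y (Q y))))^2.

Fixpoint vsum (f : nat -> H) (N : nat) : H :=
  match N with O => hzero | S m => hadd (vsum f m) (f m) end.

Definition weak_cluster (z : nat -> H) (x : H) : Prop :=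
  exists phi : nat -> nat, (forall k, (phi k < phi (S k))%nat) /\
    forall y : H, Un_cv (fun k => hinner (z (phi k)) y) (hinner x y).

Definition bounded_seq (z : nat -> H) : Prop :=
  exists M, forall n, hnorm (z n) <= M.

Definition Qop (N : nat) (lam : nat -> nat -> R) (S : nat -> H -> H)
  (n : nat) (x : H) : H := vsum (fun i => hscal (lam n i) (S i x)) N.

Definition Rop (N : nat) (lam : nat -> nat -> R) (S : nat -> H -> H)
  (alpha : nat -> R) (n : nat) (x : H) : H :=
  hadd (hscal (alpha n) x) (hscal (1 - alpha n) (Qop N lam S n x)).

Definition Top (N : nat) (lam : nat -> nat -> R) (S : nat -> H -> H)
  (alpha : nat -> R) (kappa : R) (n : nat) (x : H) : H :=
  let r := Rop N lam S alpha n x in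
  hadd (hscal (1/2) (hadd x r))
       (hscal (1/2 * ((kappa - alpha n) / (1 - alpha n))) (hsub x r)).
End Ops.

Fixpoint rsum (f : nat -> R) (N : nat) : R :=
  match N with O => 0 | S m => rsum f m + f m end.

(* max_{i < N} kap i  (for N >= 1 and kap i >= 0 this is the maximum) *)
Definition kmax (kap : nat -> R) (N : nat) : R :=
  fold_right Rmax 0 (map kap (seq 0 N)).

Definition summable (a : nat -> R) : Prop :=
  exists l, Un_cv (fun n => sum_f_R0 a n) l.

(* Main.v *)
Require Import Defs.
From Stdlib Require Import Reals Lra Lia List.
Open Scope R_scope.

Section Basics.
Context {H : Hilbert}.

Lemma add0r (x : H) : hadd x hzero = x.
Proof. rewrite hadd_comm; apply hadd_0l. Qed.

Lemma ip_0l (y : H) : hinner hzero y = 0.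
Proof. assert (E := hinner_addl H hzero hzero y). rewrite hadd_0l in E. lra. Qed.

Lemma ip_addl (x y z : H) : hinner (hadd x y) z = hinner x z + hinner y z.
Proof. apply hinner_addl. Qed.
Lemma ip_scall a (x y : H) : hinner (hscal a x) y = a * hinner x y.
Proof. apply hinner_scall. Qed.

Lemma ip_oppl (x y : H) : hinner (hopp x) y = - hinner x y.
Proof. assert (E := hinner_addl H (hopp x) x y). rewrite hadd_oppl, ip_0l in E. lra. Qed.

Lemma ip_subl (x z y : H) : hinner (hsub x z) y = hinner x y - hinner z y.
Proof. unfold hsub. rewrite ip_addl, ip_oppl. ring. Qed.

Lemma ip_0r (y : H) : hinner y hzero = 0.
Proof. rewrite hinner_sym; apply ip_0l. Qed.
Lemma ip_addr (x y z : H) : hinner z (hadd x y) = hinner z x + hinner z y.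
Proof. rewrite (hinner_sym _ z), ip_addl, (hinner_sym _ x), (hinner_sym _ y); reflexivity. Qed.
Lemma ip_scalr a (x y : H) : hinner y (hscal a x) = a * hinner y x.
Proof. rewrite (hinner_sym _ y), ip_scall, (hinner_sym _ x); reflexivity. Qed.
Lemma ip_oppr (x y : H) : hinner y (hopp x) = - hinner y x.
Proof. rewrite (hinner_sym _ y), ip_oppl, (hinner_sym _ x); reflexivity. Qed.
Lemma ip_subr (x z y : H) : hinner y (hsub x z) = hinner y x - hinner y z.
Proof. rewrite (hinner_sym _ y), ip_subl, (hinner_sym _ x), (hinner_sym _ z); reflexivity. Qed.

Lemma sub_eq0 (u v : H) : hinner (hsub u v) (hsub u v) = 0 -> u = v.
Proof.
  intro E. apply hinner_def in E. unfold hsub in E.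
  transitivity (hadd (hadd u (hopp v)) v).
  - rewrite <- hadd_assoc, hadd_oppl, add0r; reflexivity.
  - rewrite E, hadd_0l; reflexivity.
Qed.

Lemma ext_inner (u v : H) : (forall y, hinner u y = hinner v y) -> u = v.
Proof. intro E. apply sub_eq0. rewrite ip_subl, E. ring. Qed.

Lemma hn2 (x : H) : hnorm x ^ 2 = hinner x x.
Proof. unfold hnorm; apply pow2_sqrt; apply hinner_pos. Qed.

Lemma ip_vsum (f : nat -> H) N y :
  hinner (vsum f N) y = rsum (fun i => hinner (f i) y) N.
Proof. induction N; simpl; [apply ip_0l | rewrite ip_addl, IHN; reflexivity]. Qed.

End Basics.

Ltac ipx := repeat (first [rewrite ip_subl | rewrite ip_subr | rewrite ip_addl
  | rewrite ip_addr | rewrite ip_scall | rewrite ip_scalr | rewrite ip_oppl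
  | rewrite ip_oppr | rewrite ip_0l | rewrite ip_0r]).
Ltac ipxH h := repeat (first [rewrite ip_subl in h | rewrite ip_subr in h | rewrite ip_addl in h
  | rewrite ip_addr in h | rewrite ip_scall in h | rewrite ip_scalr in h | rewrite ip_oppl in h
  | rewrite ip_oppr in h | rewrite ip_0l in h | rewrite ip_0r in h]).

Lemma rsum_ext f g N : (forall i, (i < N)%nat -> f i = g i) -> rsum f N = rsum g N.
Proof. induction N; intros E; simpl; auto. rewrite IHN by (intros; apply E; lia). rewrite E by lia. reflexivity. Qed.

Lemma rsum_le f g N : (forall i, (i < N)%nat -> f i <= g i) -> rsum f N <= rsum g N.
Proof. induction N; intros E; simpl; [lra|]. assert (rsum f N <= rsum g N) by (apply IHN; intros; apply E; lia).
  assert (f N <= g N) by (apply E; lia). lra. Qed.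

Lemma rsum_term f N i : (forall j, (j < N)%nat -> 0 <= f j) -> (i < N)%nat -> f i <= rsum f N.
Proof.
  induction N; intros Hp Hi; [lia|]. simpl.
  assert (0 <= rsum f N).
  { assert (E: rsum (fun _ => 0) N = 0) by (clear; induction N; simpl; lra).
    rewrite <- E. apply rsum_le. intros; apply Hp; lia. }
  destruct (Nat.eq_dec i N) as [->|Hne].
  - lra.
  - assert (f i <= rsum f N) by (apply IHN; [intros; apply Hp; lia | lia]).
    assert (0 <= f N) by (apply Hp; lia). lra.
Qed.

Lemma rsum_lin f g A B N :
  rsum (fun j => f j * (A - B * g j)) N = A * rsum f N - B * rsum (fun j => f j * g j) N.
Proof. induction N; simpl; [ring | rewrite IHN; ring]. Qed.

Lemma rsum_scal f A N : rsum (fun j => f j * A) N = rsum f N * A.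
Proof. induction N; simpl; [ring | rewrite IHN; ring]. Qed.

Section Ops2.
Context {H : Hilbert}.

Lemma ip_Q N lam (S : nat -> H -> H) n z w :
  hinner (Qop N lam S n z) w = rsum (fun i => lam n i * hinner (S i z) w) N.
Proof. unfold Qop. rewrite ip_vsum. apply rsum_ext. intros; apply ip_scall. Qed.

Lemma ip_T N lam (S : nat -> H -> H) alpha kappa n z y : alpha n <> 1 ->
  hinner (Top N lam S alpha kappa n z) y =
  hinner z y + (1 - kappa)/2 * (hinner (Qop N lam S n z) y - hinner z y).
Proof. intro Ha. unfold Top, Rop. cbv zeta. ipx. field. intro E; apply Ha; lra. Qed.

Lemma TQvec N lam (S : nat -> H -> H) alpha kappa n z : alpha n <> 1 ->
  hsub z (Top N lam S alpha kappa n z) = hscal ((1-kappa)/2) (hsub z (Qop N lam S n z)).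
Proof. intro Ha. apply ext_inner; intro y. rewrite ip_subl, ip_T by auto. rewrite ip_scall, ip_subl. ring. Qed.

Lemma sp_fix k (S : H -> H) p z : strict_pseudo k S -> S p = p ->
  (1-k) * hinner (hsub z (S z)) (hsub z (S z)) <= 2 * hinner (hsub z (S z)) (hsub z p).
Proof.
  intros Hs Hp. specialize (Hs z p). rewrite !hn2, Hp in Hs.
  assert (E1 : hsub (S z) p = hsub (hsub z p) (hsub z (S z))) by (apply ext_inner; intro y; ipx; ring).
  assert (E2 : hsub (hsub z (S z)) (hsub p p) = hsub z (S z)) by (apply ext_inner; intro y; ipx; ring).
  rewrite E1, E2 in Hs. revert Hs. generalize (hsub z (S z)) as a. generalize (hsub z p) as b.
  intros b a Hs. ipxH Hs. rewrite (hinner_sym _ b a) in Hs. lra.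
Qed.

Lemma demi_ineq k (S : H -> H) u x : strict_pseudo k S -> k < 1 ->
  (1-k) * hinner (hsub x (S x)) (hsub x (S x)) <=
  2 * (1-k) * hinner (hsub u (S u)) (hsub x (S x)) + 2 * hinner (hsub u (S u)) (hsub u x)
  - 2 * hinner (hsub u x) (hsub x (S x)).
Proof.
  intros Hs Hk. specialize (Hs u x). rewrite !hn2 in Hs.
  assert (E1 : hsub (S u) (S x) = hadd (hadd (hopp (hsub u (S u))) (hsub u x)) (hsub x (S x)))
    by (apply ext_inner; intro y; ipx; ring).
  assert (E2 : hsub (hsub u (S u)) (hsub x (S x)) = hsub (hsub u (S u)) (hsub x (S x))) by reflexivity.
  rewrite E1 in Hs. revert Hs. generalize (hsub u (S u)) as a. generalize (hsub u x) as w.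
  generalize (hsub x (S x)) as d. intros d w a Hs. ipxH Hs.
  rewrite ?(hinner_sym _ d a), ?(hinner_sym _ w a), ?(hinner_sym _ d w) in Hs.
  assert (0 <= (1-k) * hinner a a) by (apply Rmult_le_pos; [lra | apply hinner_pos]).
  lra.
Qed.

Lemma norm_bound (u : H) M : hnorm u <= M -> hinner u u <= M * M.
Proof. intro Hm. rewrite <- hn2. assert (0 <= hnorm u) by apply sqrt_pos. simpl. nra. Qed.

Lemma sub_sq (u v : H) : hinner (hsub u v) (hsub u v) <= 2 * hinner u u + 2 * hinner v v.
Proof. assert (E := hinner_pos _ (hadd u v)). ipxH E. ipx. rewrite (hinner_sym _ v u) in *. lra. Qed.

Lemma cs2 (a b : H) d : 0 < d -> 2 * hinner a b <= d * hinner b b + hinner a a / d.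
Proof.
  intro Hd. assert (E := hinner_pos _ (hsub a (hscal d b))). ipxH E. rewrite (hinner_sym _ b a) in E.
  apply Rmult_le_reg_r with d; auto.
  replace ((d * hinner b b + hinner a a / d) * d) with (d * (d * hinner b b) + hinner a a) by (field; lra).
  lra.
Qed.

End Ops2.

Definition TZ (t : nat -> R) := forall eps, 0 < eps -> exists K, forall n, (K <= n)%nat -> t n <= eps.

Lemma cs_tz (t u : nat -> R) B : 0 <= B -> TZ t ->
  (forall n d, 0 < d -> u n <= d * B + t n / d) -> TZ u.
Proof.
  intros HB Ht Hu eps He. set (d := eps / (2*(B+1))).
  assert (Hd: 0 < d) by (unfold d; apply Rdiv_lt_0_compat; lra).
  destruct (Ht (d*eps/2)) as [K HK]. { apply Rdiv_lt_0_compat; [apply Rmult_lt_0_compat|]; lra. }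
  exists K; intros n Hn. specialize (Hu n d Hd). specialize (HK n Hn).
  assert (d*(B+1) = eps/2) by (unfold d; field; lra).
  assert (t n / d <= eps/2).
  { unfold Rdiv. apply Rle_trans with (d*eps/2 * /d).
    - apply Rmult_le_compat_r; [left; apply Rinv_0_lt_compat; auto | auto].
    - right; field; lra. }
  lra.
Qed.

Lemma TZ_scale g m : 0 < m -> TZ (fun n => m * g n) -> TZ g.
Proof.
  intros Hm Ht eps He. destruct (Ht (m*eps)) as [K HK]; [apply Rmult_lt_0_compat; lra|].
  exists K; intros n Hn. apply Rmult_le_reg_l with m; auto.
Qed.

Lemma TZ_le g h : (forall n, g n <= h n) -> TZ h -> TZ g.
Proof. intros E Ht eps He. destruct (Ht eps He) as [K HK]. exists K; intros n Hn.
  eapply Rle_trans; [apply E | apply HK; auto]. Qed.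

Lemma TZ_sub g (phi : nat -> nat) : (forall k, (k <= phi k)%nat) -> TZ g -> TZ (fun k => g (phi k)).
Proof. intros Hp Ht eps He. destruct (Ht eps He) as [K HK]. exists K; intros n Hn.
  apply HK. specialize (Hp n). lia. Qed.

Lemma TZ_final C v r : (forall k, C <= v k + r k) -> TZ v -> TZ r -> C <= 0.
Proof.
  intros E Hv Hr. destruct (Rle_or_lt C 0) as [|HC]; auto.
  destruct (Hv (C/3)) as [K1 H1]; [lra|]. destruct (Hr (C/3)) as [K2 H2]; [lra|].
  specialize (E (K1+K2)%nat). specialize (H1 (K1+K2)%nat ltac:(lia)).
  specialize (H2 (K1+K2)%nat ltac:(lia)). lra.
Qed.

Lemma summable_TZ a : summable a -> TZ a.
Proof.
  intros [l Hl] e He. destruct (Hl (e/2)) as [K HK]; [lra|].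
  exists (S K). intros n Hn. destruct n as [|m]; [lia|].
  assert (A1 := HK m ltac:(lia)). assert (A2 := HK (S m) ltac:(lia)).
  unfold R_dist in *. simpl in A2.
  apply Rabs_def2 in A1. apply Rabs_def2 in A2. lra.
Qed.

Lemma phi_ge (phi : nat -> nat) : (forall k, (phi k < phi (S k))%nat) -> forall k, (k <= phi k)%nat.
Proof. intros Hp k. induction k; [lia|]. specialize (Hp k). lia. Qed.

Lemma aux_shrink k X Y : 0 <= k < 1 -> X <= Y -> 0 <= Y -> (1-k)*X <= Y.
Proof. intros. nra. Qed.

Lemma key_ineq (H : Hilbert) N lam (S : nat -> H -> H) kap p z n i :
  (forall j, (j < N)%nat -> 0 <= kap j < 1) ->
  (forall j, (j < N)%nat -> strict_pseudo (kap j) (S j)) ->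
  (forall j, (j < N)%nat -> S j p = p) ->
  (forall j, (j < N)%nat -> 0 < lam n j) -> rsum (lam n) N = 1 -> (i < N)%nat ->
  lam n i * ((1 - kap i) * hinner (hsub z (S i z)) (hsub z (S i z)))
  <= 2 * hinner (hsub z (Qop N lam S n z)) (hsub z p).
Proof.
  intros Hk Hs Hp Hl Hsum Hi.
  rewrite (ip_subl z (Qop N lam S n z)), ip_Q.
  replace (2 * (hinner z (hsub z p) - rsum (fun j => lam n j * hinner (S j z) (hsub z p)) N))
    with (rsum (fun j => lam n j * (2 * hinner (hsub z (S j z)) (hsub z p))) N).
  2: { rewrite (rsum_ext _ (fun j => lam n j * (2*hinner z (hsub z p) - 2*hinner (S j z) (hsub z p))))
         by (intros; rewrite ip_subl; ring).
       rewrite rsum_lin, Hsum. ring. }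
  apply Rle_trans with (rsum (fun j => lam n j * ((1 - kap j) * hinner (hsub z (S j z)) (hsub z (S j z)))) N).
  - apply (rsum_term (fun j => lam n j * ((1 - kap j) * hinner (hsub z (S j z)) (hsub z (S j z))))); auto.
    intros j Hj. specialize (Hl j Hj). specialize (Hk j Hj).
    apply Rmult_le_pos; [lra|]. apply Rmult_le_pos; [lra| apply hinner_pos].
  - apply rsum_le. intros j Hj. apply Rmult_le_compat_l; [specialize (Hl j Hj); lra|].
    apply sp_fix; auto.
Qed.

Theorem mainTheorem4 (H : Hilbert) (N : nat) (S : nat -> H -> H)
  (kap : nat -> R) (lam : nat -> nat -> R) (alpha : nat -> R) :
  (1 <= N)%nat ->
  (forall i, (i < N)%nat -> 0 <= kap i < 1) ->
  (forall i, (i < N)%nat -> strict_pseudo (kap i) (S i)) ->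
  (exists p : H, forall i, (i < N)%nat -> S i p = p) ->
  (forall n i, (i < N)%nat -> 0 < lam n i) ->
  (forall n, rsum (lam n) N = 1) ->
  (forall i, (i < N)%nat -> exists eps, 0 < eps /\ forall n, eps <= lam n i) ->
  (forall n, kmax kap N < alpha n < 1) ->
  let T := Top N lam S alpha (kmax kap N) in
  (forall x : H, (forall n, T n x = x) <-> (forall i, (i < N)%nat -> S i x = x)) /\
  (forall z : nat -> H,
     bounded_seq z ->
     summable (fun n => (hnorm (hsub (z (Datatypes.S n)) (z n)))^2) ->
     summable (fun n => (hnorm (hsub (z n) (T n (z n))))^2) ->
     forall x : H, weak_cluster z x -> forall n, T n x = x).
Proof.
  intros HN Hkap Hsp [p Hp] Hlam Hsum Heps Halpha T. unfold T; clear T.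
  set (k := kmax kap N) in *.
  assert (Hk1 : k < 1) by (destruct (Halpha 0%nat); lra).
  assert (Ha1 : forall n, alpha n <> 1) by (intros n E; destruct (Halpha n); lra).
  assert (Hfix : forall x : H, (forall n, Top N lam S alpha k n x = x) <-> (forall i, (i < N)%nat -> S i x = x)).
  { intro x; split.
    - intros HT i Hi.
      assert (E : forall w, hinner (hsub x (Qop N lam S 0 x)) w = 0).
      { intro w. assert (E0 := f_equal (fun v => hinner v w) (HT 0%nat)). simpl in E0.
        rewrite ip_T in E0 by auto. rewrite ip_subl.
        assert ((1-k)/2 * (hinner (Qop N lam S 0 x) w - hinner x w) = 0) by lra.
        apply Rmult_integral in H0. destruct H0 as [H0|H0]; [|lra].
        exfalso. assert ((1-k)/2 > 0) by lra. lra. }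
      assert (Hq := key_ineq H N lam S kap p x 0 i Hkap Hsp Hp (Hlam 0%nat) (Hsum 0%nat) Hi).
      rewrite E in Hq.
      assert (0 < lam 0%nat i * (1 - kap i)) by (apply Rmult_lt_0_compat; [apply Hlam; auto | specialize (Hkap i Hi); lra]).
      assert (Hpos := hinner_pos _ (hsub x (S i x))).
      symmetry. apply sub_eq0. nra.
    - intros HS n. apply ext_inner; intro y. rewrite ip_T by auto. rewrite ip_Q.
      rewrite (rsum_ext _ (fun j => lam n j * hinner x y)) by (intros; rewrite HS; auto).
      rewrite rsum_scal, Hsum. ring. }
  split; [exact Hfix|].
  intros z [M HM] _ Hs2 x [phi [Hphi Hw]].
  apply Hfix. intros i Hi.
  set (c := (1-k)/2).
  assert (Hc : 0 < c) by (unfold c; lra).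
  assert (HQ : TZ (fun n => hinner (hsub (z n) (Qop N lam S n (z n))) (hsub (z n) (Qop N lam S n (z n))))).
  { apply TZ_scale with (c*c); [apply Rmult_lt_0_compat; auto|].
    apply TZ_le with (fun n => hnorm (hsub (z n) (Top N lam S alpha k n (z n))) ^ 2).
    - intro n. rewrite hn2, TQvec by auto. rewrite ip_scall, ip_scalr. fold c. lra.
    - apply summable_TZ; auto. }
  destruct (Heps i Hi) as [ei [Hei Hlei]].
  assert (Hki := Hkap i Hi).
  set (g := fun n => hinner (hsub (z n) (S i (z n))) (hsub (z n) (S i (z n)))).
  assert (Hg : TZ g).
  { apply TZ_scale with (ei * (1 - kap i)); [apply Rmult_lt_0_compat; lra|].
    apply TZ_le with (fun n => lam n i * ((1 - kap i) * g n)).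
    - intro n. rewrite Rmult_assoc. apply Rmult_le_compat_r; auto.
      apply Rmult_le_pos; [lra| apply hinner_pos].
    - apply cs_tz with (t := fun n => hinner (hsub (z n) (Qop N lam S n (z n))) (hsub (z n) (Qop N lam S n (z n))))
        (B := 2 * (M*M) + 2 * hinner p p).
      + assert (0 <= hinner p p) by apply hinner_pos.
        assert (0 <= hnorm (z 0%nat)) by apply sqrt_pos. specialize (HM 0%nat). nra.
      + exact HQ.
      + intros n d Hd. eapply Rle_trans.
        { apply (key_ineq H N lam S kap p (z n) n i Hkap Hsp Hp (Hlam n) (Hsum n) Hi). }
        eapply Rle_trans; [apply (cs2 _ _ d Hd)|].
        assert (E1 := sub_sq (z n) p). assert (E2 := norm_bound _ _ (HM n)).
        assert (hinner (hsub (z n) p) (hsub (z n) p) <= 2 * (M*M) + 2 * hinner p p) by lra.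
        apply Rplus_le_compat_r. apply Rmult_le_compat_l; lra. }
  set (d := hsub x (S i x)).
  assert (HD : (1 - kap i) * hinner d d <= 0).
  { apply TZ_final with
      (v := fun k0 => 2 * (1 - kap i) * hinner (hsub (z (phi k0)) (S i (z (phi k0)))) d
                     + 2 * hinner (hsub (z (phi k0)) (S i (z (phi k0)))) (hsub (z (phi k0)) x))
      (r := fun k0 => - 2 * hinner (hsub (z (phi k0)) x) d).
    - intro k0. unfold d. pose proof (demi_ineq (kap i) (S i) (z (phi k0)) x (Hsp i Hi) ltac:(lra)). lra.
    - apply cs_tz with (t := fun k0 => 2 * g (phi k0)) (B := hinner d d + (2 * (M*M) + 2 * hinner x x)).
      + assert (0 <= hinner d d) by apply hinner_pos. assert (0 <= hinner x x) by apply hinner_pos.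
        assert (0 <= hnorm (z 0%nat)) by apply sqrt_pos. specialize (HM 0%nat). nra.
      + intros eps He. destruct (TZ_sub g phi (phi_ge phi Hphi) Hg (eps/2)) as [K HK]; [lra|].
        exists K; intros n Hn. specialize (HK n Hn). simpl in HK. lra.
      + intros n dl Hdl. set (u := z (phi n)).
        assert (C1 := cs2 (hsub u (S i u)) d dl Hdl).
        assert (C2 := cs2 (hsub u (S i u)) (hsub u x) dl Hdl).
        assert (E1 := sub_sq u x). assert (E2 := norm_bound _ _ (HM (phi n))). fold u in E2.
        assert (Hgn : 0 <= g (phi n) / dl) by (unfold Rdiv; apply Rmult_le_pos; [apply hinner_pos | left; apply Rinv_0_lt_compat; auto]).
        assert (Hdd : 0 <= hinner d d) by apply hinner_pos.
        assert (C3 : (1 - kap i) * (2 * hinner (hsub u (S i u)) d) <= dl * hinner d d + g (phi n) / dl).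
        { apply aux_shrink; [exact Hki | exact C1 | ].
          apply Rplus_le_le_0_compat; [apply Rmult_le_pos; lra | auto]. }
        assert (C4 : 2 * hinner (hsub u (S i u)) (hsub u x) <= dl * (2 * (M*M) + 2 * hinner x x) + g (phi n) / dl).
        { eapply Rle_trans; [exact C2|]. unfold g; fold u. apply Rplus_le_compat_r.
          apply Rmult_le_compat_l; lra. }
        replace (2 * g (phi n) / dl) with (g (phi n) / dl + g (phi n) / dl) by (field; lra).
        lra.
    - intros eps He. destruct (Hw d (eps/2)) as [K HK]; [lra|].
      exists K; intros n Hn. specialize (HK n ltac:(lia)). unfold R_dist in HK.
      apply Rabs_def2 in HK. rewrite ip_subl. lra. }
  assert (0 <= hinner d d) by apply hinner_pos.
  symmetry. apply sub_eq0. fold d. nra.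
Qed.
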